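(* Let $M$ be a locally-finite map in the hyperbolic plane with exactly one end such that $V(M)$ is a locally finite collection of vertices, and suppose a group $G\le\mathrm{Isom}(\mathbb{H}^2)$ acts quasi-transitively on $M$. Then $G$ is finitely generated.
   Context: A map $M$ in a surface $X$ is a (simple, connected, infinite) graph embedded in $X$: vertices are distinct points, edges are curves meeting only at common endpoints, and each face is homeomorphic to an open disc. Locally-finite and number of ends refer to the underlying graph. $V(M)$ is a locally finite collection of vertices if every compact subset contains only finitely many vertices of $M$. $G$ acts on $M$ if each $g\in G$ maps $M$ to itself with $g(V(M))=V(M)$ inducing a graph automorphism; quasi-transitively means finitely many orbits on $V(M)$. *)

(* Defs.v *)
From HB Require Import structures.
From mathcomp Require Import all_boot all_order all_algebra.
From mathcomp Require Import all_classical all_reals all_analysis.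
Set Implicit Arguments. Unset Strict Implicit. Unset Printing Implicit Defensive.
Import Order.TTheory GRing.Theory Num.Theory.
Import numFieldNormedType.Exports.
Local Open Scope classical_set_scope.
Local Open Scope ring_scope.

Definition Hset (R : realType) : set (R * R) := [set p | 0 < p.2].

(* H^2 as the subtype of R^2 = R * R, with the subspace topology
   (mathcomp-analysis equips [set_type A] with the initial topology). *)
Arguments Hset R : clear implicits.
Definition H2 (R : realType) := set_type (Hset R).
HB.instance Definition _ (R : realType) := Topological.copy (H2 R) (set_type (Hset R)).

Definition acosh (R : realType) (x : R) : R := ln (x + Num.sqrt (x ^+ 2 - 1)).

Definition hdist (R : realType) (p q : H2 R) : R :=
  let a := set_val p in let b := set_val q in
  acosh (1 + ((a.1 - b.1) ^+ 2 + (a.2 - b.2) ^+ 2) / (2 * a.2 * b.2)).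

Definition isometry (R : realType) (f : H2 R -> H2 R) : Prop :=
  bijective f /\ forall p q, hdist (f p) (f q) = hdist p q.

Definition isom_subgroup (R : realType) (G : set (H2 R -> H2 R)) : Prop :=
  [/\ (forall g, G g -> isometry g),
      G id,
      (forall g h, G g -> G h -> G (g \o h)) &
      (forall g, G g -> exists2 h, G h & cancel g h /\ cancel h g)].

Inductive generated (T : Type) (S : set (T -> T)) : (T -> T) -> Prop :=
  | gen_id : generated S id
  | gen_gen s : S s -> generated S s
  | gen_inv s h : S s -> cancel s h -> cancel h s -> generated S h
  | gen_comp f g : generated S f -> generated S g -> generated S (f \o g).

Definition finitely_generated (T : Type) (G : set (T -> T)) : Prop :=
  exists S : set (T -> T), [/\ finite_set S, S `<=` G &
    forall g, G g -> generated S g].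

Definition simple_graph (V : Type) (adj : V -> V -> Prop) : Prop :=
  (forall u v, adj u v -> adj v u) /\ (forall u, ~ adj u u).

Inductive reach (V : Type) (adj : V -> V -> Prop) (P : set V) (u : V) : V -> Prop :=
  | reach_refl : P u -> reach adj P u u
  | reach_step w v : reach adj P u w -> adj w v -> P v -> reach adj P u v.

Definition graph_connected (V : Type) (adj : V -> V -> Prop) : Prop :=
  forall u v, reach adj setT u v.

Definition graph_locally_finite (V : Type) (adj : V -> V -> Prop) : Prop :=
  forall v, finite_set [set w | adj v w].

Definition ray (V : Type) (adj : V -> V -> Prop) (r : nat -> V) : Prop :=
  injective r /\ forall n, adj (r n) (r n.+1).

Definition equiv_rays (V : Type) (adj : V -> V -> Prop) (r1 r2 : nat -> V) : Prop :=
  forall S : set V, finite_set S ->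
    exists N, [/\ (forall k, (N <= k)%N -> ~ S (r1 k)),
                  (forall k, (N <= k)%N -> ~ S (r2 k)) &
                  reach adj (~` S) (r1 N) (r2 N)].

Definition one_ended (V : Type) (adj : V -> V -> Prop) : Prop :=
  (exists r, ray adj r) /\
  (forall r1 r2, ray adj r1 -> ray adj r2 -> equiv_rays adj r1 r2).

Definition unit_interval (R : realType) : set R := [set t | 0 <= t <= 1].
Definition open_unit_interval (R : realType) : set R := [set t | 0 < t < 1].

Arguments unit_interval R : clear implicits.
Arguments open_unit_interval R : clear implicits.

Definition open_disc (R : realType) : set (R * R) :=
  [set p | p.1 ^+ 2 + p.2 ^+ 2 < 1].
Arguments open_disc R : clear implicits.

Definition homeomorphic (X Y : topologicalType) (A : set X) (B : set Y) : Prop :=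
  exists (f : X -> Y) (g : Y -> X),
    [/\ {within A, continuous f}, {within B, continuous g},
        f @` A `<=` B, g @` B `<=` A &
        (forall a, A a -> g (f a) = a) /\ (forall b, B b -> f (g b) = b)].

Definition edge_img (R : realType) (V : Type) (arc : V -> V -> R -> H2 R) (u v : V)
  : set (H2 R) := arc u v @` unit_interval R.

Definition map_points (R : realType) (V : Type) (adj : V -> V -> Prop)
  (pos : V -> H2 R) (arc : V -> V -> R -> H2 R) : set (H2 R) :=
  range pos `|` \bigcup_(e in [set e : V * V | adj e.1 e.2]) edge_img arc e.1 e.2.

(* A map in H^2: a simple, connected, infinite graph (V, adj) embedded via
   [pos] (vertices) and [arc u v] (the edge uv, parametrised on [0,1]). *)
Definition is_map (R : realType) (V : Type) (adj : V -> V -> Prop)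
  (pos : V -> H2 R) (arc : V -> V -> R -> H2 R) : Prop :=
  [/\ simple_graph adj, graph_connected adj & ~ finite_set [set: V]] /\
  injective pos /\
  (forall u v, adj u v ->
     [/\ {within unit_interval R, continuous arc u v},
         {in unit_interval R &, injective (arc u v)},
         arc u v 0 = pos u, arc u v 1 = pos v &
         edge_img arc u v = edge_img arc v u]) /\
  (forall u v t w, adj u v -> open_unit_interval R t -> arc u v t <> pos w) /\
  (forall u v u' v' x, adj u v -> adj u' v' ->
     ~ (u = u' /\ v = v') -> ~ (u = v' /\ v = u') ->
     edge_img arc u v x -> edge_img arc u' v' x ->
     exists w, [/\ w = u \/ w = v, w = u' \/ w = v' & x = pos w]) /\
  (forall x, ~ map_points adj pos arc x ->
     homeomorphic (connected_component (~` map_points adj pos arc) x)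
                  (open_disc R)).

Definition vertices_locally_finite (R : realType) (V : Type) (pos : V -> H2 R) : Prop :=
  forall K : set (H2 R), compact K -> finite_set [set v | K (pos v)].

Definition acts_on_map (R : realType) (V : Type) (adj : V -> V -> Prop)
  (pos : V -> H2 R) (arc : V -> V -> R -> H2 R) (G : set (H2 R -> H2 R)) : Prop :=
  forall g, G g ->
    [/\ g @` map_points adj pos arc = map_points adj pos arc,
        g @` range pos = range pos &
        exists sigma : V -> V, [/\ bijective sigma,
            (forall v, pos (sigma v) = g (pos v)) &
            (forall u v, adj u v <-> adj (sigma u) (sigma v))]].

Definition quasi_transitive (R : realType) (V : Type) (pos : V -> H2 R)
  (G : set (H2 R -> H2 R)) : Prop :=
  exists F : set V, finite_set F /\
    forall v, exists w, F w /\ exists g, G g /\ g (pos w) = pos v.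

(* Main.v *)
Require Import Defs.
From HB Require Import structures.
From mathcomp Require Import all_boot all_order all_algebra.
From mathcomp Require Import all_classical all_reals all_analysis.
From mathcomp Require Import ring lra.
Set Implicit Arguments. Unset Strict Implicit. Unset Printing Implicit Defensive.
Import Order.TTheory GRing.Theory Num.Theory.
Local Open Scope classical_set_scope.
Local Open Scope ring_scope.

Definition cx (R : realType) (a : H2 R) : R := (set_val a).1.
Definition cy (R : realType) (a : H2 R) : R := (set_val a).2.

Lemma cy_gt0 (R : realType) (a : H2 R) : 0 < cy a.
Proof. rewrite /cy set_valE. exact: (set_valP a). Qed.

Lemma H2_inj (R : realType) (a b : H2 R) : cx a = cx b -> cy a = cy b -> a = b.
Proof.
rewrite /cx /cy set_valE => h1 h2; apply: val_inj.
by case: (\val a) h1 h2 => ? ?; case: (\val b) => ? ? /= -> ->.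
Qed.

Definition Ed (R : realType) (a b : H2 R) : R :=
  1 + ((cx a - cx b) ^+ 2 + (cy a - cy b) ^+ 2) / (2 * cy a * cy b).

Lemma Ed_ge1 (R : realType) (a b : H2 R) : 1 <= Ed a b.
Proof.
rewrite /Ed lerDl; apply: divr_ge0; first by rewrite addr_ge0 // sqr_ge0.
by rewrite !mulr_ge0 // ltW // cy_gt0.
Qed.

Lemma acosh_inj (R : realType) (x y : R) : 1 <= x -> 1 <= y -> acosh x = acosh y -> x = y.
Proof.
move=> hx hy; rewrite /acosh.
have pos (z : R) : 1 <= z -> z + Num.sqrt (z ^+ 2 - 1) \is Num.pos.
  by move=> hz; rewrite posrE; apply: (lt_le_trans ltr01); apply: ler_wpDr => //; exact: sqrtr_ge0.
move/(ln_inj (pos _ hx) (pos _ hy)).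
have mono (z t : R) : 1 <= z -> z < t -> z + Num.sqrt (z ^+ 2 - 1) < t + Num.sqrt (t ^+ 2 - 1).
  move=> hz zt; apply: ltr_leD => //; rewrite ler_sqrt; last first.
    by rewrite subr_ge0 expr_ge1 //; lra.
  by rewrite lerD2r ler_pXn2r // ?nnegrE; lra.
case: (ltgtP x y) => // [xy|yx] e.
- by move: (mono _ _ hx xy); rewrite e ltxx.
- by move: (mono _ _ hy yx); rewrite e ltxx.
Qed.

Lemma iso_Ed (R : realType) (k : H2 R -> H2 R) :
  (forall p q, hdist (k p) (k q) = hdist p q) -> forall a b, Ed (k a) (k b) = Ed a b.
Proof. by move=> h a b; apply: acosh_inj; rewrite ?Ed_ge1 //; exact: h. Qed.

Definition vec (R : realType) := (R * R * R)%type.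
Definition Bv (R : realType) (u v : vec R) : R :=
  u.1.1 * v.2 + u.2 * v.1.1 - 2 * u.1.2 * v.1.2.
Definition vadd (R : realType) (u v : vec R) : vec R :=
  (u.1.1 + v.1.1, u.1.2 + v.1.2, u.2 + v.2).
Definition vsub (R : realType) (u v : vec R) : vec R :=
  (u.1.1 - v.1.1, u.1.2 - v.1.2, u.2 - v.2).
Definition vscale (R : realType) (t : R) (u : vec R) : vec R :=
  (t * u.1.1, t * u.1.2, t * u.2).
Definition nv (R : realType) (w v : vec R) : vec R :=
  (2 * w.1.1 * v.1.2 - 2 * w.1.2 * v.1.1,
   w.1.1 * v.2 - w.2 * v.1.1,
   2 * w.1.2 * v.2 - 2 * w.2 * v.1.2).

Definition phi (R : realType) (a : H2 R) : vec R :=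
  ((cx a ^+ 2 + cy a ^+ 2) / cy a, cx a / cy a, 1 / cy a).

Lemma Bv_phi (R : realType) (a b : H2 R) : Bv (phi a) (phi b) = 2 * Ed a b.
Proof.
have ha := cy_gt0 a; have hb := cy_gt0 b.
rewrite /Bv /phi /Ed /=; move: (cx a) (cy a) (cx b) (cy b) ha hb => xa ya xb yb ha hb.
field; by rewrite !lt0r_neq0.
Qed.

Lemma Ed_refl (R : realType) (a : H2 R) : Ed a a = 1.
Proof. by rewrite /Ed !subrr expr0n /= addr0 mul0r addr0. Qed.

Lemma phi_inj (R : realType) : injective (@phi R).
Proof.
move=> a b; rewrite /phi => -[e1 e2 e3].
have ha := cy_gt0 a; have hb := cy_gt0 b.
have ey : cy a = cy b.
  by move: e3; rewrite !div1r => /invr_inj.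
apply: H2_inj => //.
by move: e2; rewrite ey => /(congr1 (fun t => t * cy b)); rewrite !divfK // lt0r_neq0.
Qed.

Lemma Bv_sym (R : realType) (u v : vec R) : Bv u v = Bv v u.
Proof. rewrite /Bv; ring. Qed.

Lemma NN (R : realType) (w v : vec R) :
  Bv (nv w v) (nv w v) = - 2 * (Bv w v ^+ 2 - Bv w w * Bv v v).
Proof. case: w => [[w1 w2] w3]; case: v => [[v1 v2] v3]; rewrite /Bv /nv /=; ring. Qed.

Lemma cross_core (R : realType) (d1 d2 d3 n1 n2 n3 : R) :
  d2 * n3 - d3 * n2 = 0 -> d1 * n2 - d2 * n1 = 0 -> d1 * n3 - d3 * n1 = 0 ->
  [/\ d1 * (n1 * n3 + n3 * n1 - 2 * n2 * n2) = (d1 * n3 + d3 * n1 - 2 * d2 * n2) * n1,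
      d2 * (n1 * n3 + n3 * n1 - 2 * n2 * n2) = (d1 * n3 + d3 * n1 - 2 * d2 * n2) * n2 &
      d3 * (n1 * n3 + n3 * n1 - 2 * n2 * n2) = (d1 * n3 + d3 * n1 - 2 * d2 * n2) * n3].
Proof.
move=> e23 e12 e13; split; apply/eqP; rewrite -subr_eq0; apply/eqP.
- transitivity (n1 * (d1 * n3 - d3 * n1) - 2 * n2 * (d1 * n2 - d2 * n1)); first ring.
  by rewrite e13 e12; ring.
- transitivity (- n3 * (d1 * n2 - d2 * n1) + n1 * (d2 * n3 - d3 * n2)); first ring.
  by rewrite e23 e12; ring.
- transitivity (- n3 * (d1 * n3 - d3 * n1) + 2 * n2 * (d2 * n3 - d3 * n2)); first ring.
  by rewrite e23 e13; ring.
Qed.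

Lemma decomp (R : realType) (d w v : vec R) :
  Bv d w = 0 -> Bv d v = 0 -> Bv (nv w v) (nv w v) != 0 ->
  d = vscale (Bv d (nv w v) / Bv (nv w v) (nv w v)) (nv w v).
Proof.
case: d => [[d1 d2] d3]; case: w => [[w1 w2] w3]; case: v => [[v1 v2] v3].
rewrite /Bv /nv /vscale /= => hw hv hN.
have e23 : d2 * (2 * w2 * v3 - 2 * w3 * v2) - d3 * (w1 * v3 - w3 * v1) = 0.
  transitivity (w3 * (d1 * v3 + d3 * v1 - 2 * d2 * v2) - v3 * (d1 * w3 + d3 * w1 - 2 * d2 * w2)).
    ring.
  by rewrite hw hv; ring.
have e12 : d1 * (w1 * v3 - w3 * v1) - d2 * (2 * w1 * v2 - 2 * w2 * v1) = 0.
  transitivity (w1 * (d1 * v3 + d3 * v1 - 2 * d2 * v2) - v1 * (d1 * w3 + d3 * w1 - 2 * d2 * w2)).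
    ring.
  by rewrite hw hv; ring.
have e13 : d1 * (2 * w2 * v3 - 2 * w3 * v2) - d3 * (2 * w1 * v2 - 2 * w2 * v1) = 0.
  transitivity (2 * w2 * (d1 * v3 + d3 * v1 - 2 * d2 * v2) - 2 * v2 * (d1 * w3 + d3 * w1 - 2 * d2 * w2)).
    ring.
  by rewrite hw hv; ring.
move: hN e23 e12 e13.
move: (2 * w1 * v2 - 2 * w2 * v1) (w1 * v3 - w3 * v1) (2 * w2 * v3 - 2 * w3 * v2) => n1 n2 n3 hN e23 e12 e13.
have [f1 f2 f3] := cross_core e23 e12 e13.
by congr (_, _, _); rewrite mulrAC -?f1 -?f2 -?f3 mulfK.
Qed.

Lemma core_arith (R : realType) (N ta tc ba bc : R) : N != 0 -> tc != 0 ->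
  ta * ba + ta * ba + ta * ta * N = 0 -> ta * bc + tc * ba + ta * tc * N = 0 ->
  ta = -2 * ba / N.
Proof.
move=> hN htc h1 h2; have [ta0|hta] := eqVneq ta 0.
  rewrite ta0 in h2 *.
  move: h2; rewrite !mul0r add0r addr0 => /eqP; rewrite mulf_eq0 (negbTE htc) /= => /eqP ->.
  by rewrite mulr0 mul0r.
have h3 : 2 * ba + ta * N = 0.
  apply/eqP; move: h1 => /eqP; apply: contraLR => h.
  have -> : ta * ba + ta * ba + ta * ta * N = ta * (2 * ba + ta * N) by ring.
  by rewrite mulf_neq0.
apply: (mulIf hN); rewrite divfK //; move: h3; lra.
Qed.

Lemma Bv_expand (R : realType) (u u' n : vec R) (t t' : R) :
  Bv (vadd u (vscale t n)) (vadd u' (vscale t' n)) =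
  Bv u u' + t * Bv n u' + t' * Bv u n + t * t' * Bv n n.
Proof.
case: u => [[? ?] ?]; case: u' => [[? ?] ?]; case: n => [[? ?] ?]; rewrite /Bv /=; ring.
Qed.

Lemma Bv_subl (R : realType) (u u' w : vec R) : Bv (vsub u u') w = Bv u w - Bv u' w.
Proof. case: u => [[? ?] ?]; case: u' => [[? ?] ?]; case: w => [[? ?] ?]; rewrite /Bv /=; ring. Qed.

Lemma vsub_add (R : realType) (u u' d : vec R) : vsub u u' = d -> u = vadd u' d.
Proof.
case: u => [[? ?] ?]; case: u' => [[? ?] ?]; case: d => [[? ?] ?]; rewrite /vsub /vadd /=.
by case=> <- <- <-; congr (_, _, _); ring.
Qed.

Lemma vadd0 (R : realType) (u n : vec R) : vadd u (vscale 0 n) = u.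
Proof. by case: u => [[? ?] ?]; rewrite /vadd /vscale /= !mul0r !addr0. Qed.

Lemma Ed_gt1 (R : realType) (p q : H2 R) : p <> q -> 1 < Ed p q.
Proof.
move=> pq; rewrite /Ed ltrDl; apply: divr_gt0; last first.
  by rewrite !mulr_gt0 // cy_gt0.
rewrite lt_neqAle addr_ge0 ?sqr_ge0 // andbT eq_sym paddr_eq0 ?sqr_ge0 //.
rewrite !sqrf_eq0 !subr_eq0; apply/negP => /andP[/eqP h1 /eqP h2].
exact: pq (H2_inj h1 h2).
Qed.

Lemma rigid (R : realType) (k : H2 R -> H2 R) (p q : H2 R) :
  (forall a b, Ed (k a) (k b) = Ed a b) -> k p = p -> k q = q -> p <> q ->
  forall c, k c <> c -> forall a,
  phi (k a) = vadd (phi a) (vscale (-2 * Bv (phi a) (nv (phi p) (phi q))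
                        / Bv (nv (phi p) (phi q)) (nv (phi p) (phi q)))
                        (nv (phi p) (phi q))).
Proof.
move=> Hk kp kq pq c kc a.
set w := phi p; set v := phi q; set n := nv w v; set N := Bv n n.
have Bpp x : Bv (phi x) (phi x) = 2 by rewrite Bv_phi Ed_refl mulr1.
have hN : N != 0.
  rewrite /N /n NN /w /v !Bpp Bv_phi.
  have := Ed_gt1 pq; set e := Ed p q => he.
  apply/eqP => h; move: h; nra.
pose tau x := Bv (vsub (phi (k x)) (phi x)) n / N.
have dec x : phi (k x) = vadd (phi x) (vscale (tau x) n).
  apply: vsub_add; apply: decomp => //.
  - rewrite Bv_subl /w !Bv_phi; have := Hk x p; rewrite kp => ->; ring.
  - rewrite Bv_subl /v !Bv_phi; have := Hk x q; rewrite kq => ->; ring.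
have cross x y : tau x * Bv (phi y) n + tau y * Bv (phi x) n + tau x * tau y * N = 0.
  have := Hk x y; move/(congr1 (fun t => 2 * t)); rewrite -!Bv_phi (dec x) (dec y).
  rewrite Bv_expand (Bv_sym n) => /eqP; rewrite -subr_eq0 => /eqP <-; rewrite -/N; lra.
have htc : tau c != 0.
  apply/eqP => h; apply: kc; apply: phi_inj; by rewrite dec h vadd0.
transitivity (vadd (phi a) (vscale (tau a) n)); first exact: dec a.
congr vadd; congr vscale.
apply: (core_arith hN htc (cross a a)).
exact: (cross a c).
Qed.

Lemma two_nonid (R : realType) (k1 k2 : H2 R -> H2 R) (p q : H2 R) :
  (forall a b, Ed (k1 a) (k1 b) = Ed a b) -> k1 p = p -> k1 q = q ->
  (forall a b, Ed (k2 a) (k2 b) = Ed a b) -> k2 p = p -> k2 q = q -> p <> q ->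
  (exists c, k1 c <> c) -> (exists c, k2 c <> c) -> k1 = k2.
Proof.
move=> H1 p1 q1 H2 p2 q2 pq [c1 h1] [c2 h2]; apply: funext => a; apply: phi_inj.
by rewrite (rigid H1 p1 q1 pq h1) (rigid H2 p2 q2 pq h2).
Qed.

Lemma A_finite (R : realType) (G : set (H2 R -> H2 R)) (P Q P' Q' : H2 R) :
  isom_subgroup G -> P <> Q ->
  finite_set [set g | G g /\ g P = P' /\ g Q = Q'].
Proof.
case=> Hiso Hid Hcomp Hinv PQ.
have isoE f : G f -> forall a b, Ed (f a) (f b) = Ed a b.
  by move=> Gf; apply: iso_Ed; exact: (Hiso f Gf).2.
have [[g0 [G0 [e0P e0Q]]]|none] := pselect (exists g, G g /\ g P = P' /\ g Q = Q'); last first.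
  apply: (sub_finite_set (B := set0)); last exact: finite_set0.
  by move=> g Ag; apply: none; exists g.
have [h0 Gh0 [c1 c2]] := Hinv g0 G0.
have kE g : G g -> forall a b, Ed (h0 (g a)) (h0 (g b)) = Ed a b.
  by move=> Gg a b; rewrite (isoE h0 Gh0) (isoE g Gg).
have kP g : g P = P' -> h0 (g P) = P by move=> ->; rewrite -e0P c1.
have kQ g : g Q = Q' -> h0 (g Q) = Q by move=> ->; rewrite -e0Q c1.
have nonid g : g <> g0 -> exists c, h0 (g c) <> c.
  move=> ne; apply: contrapT => hc; apply: ne; apply: funext => x.
  have : h0 (g x) = x by apply: contrapT => hx; apply: hc; exists x.
  by move=> e; rewrite -[in RHS]e c2.
have [[g1 [[G1 [e1P e1Q]] ne1]]|all0] :=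
  pselect (exists g1, (G g1 /\ g1 P = P' /\ g1 Q = Q') /\ g1 <> g0).
  apply: (sub_finite_set (B := [set g0; g1])); last exact: finite_set2.
  move=> g [Gg [eP eQ]]; have [->|ne] := pselect (g = g0); first by left.
  right; have ek : (fun x => h0 (g x)) = (fun x => h0 (g1 x)).
    apply: (@two_nonid R _ _ P Q) => //.
    - exact: kE.
    - exact: kP.
    - exact: kQ.
    - exact: kE.
    - exact: kP.
    - exact: kQ.
    - exact: nonid.
    - exact: nonid.
  apply: funext => x; rewrite -[g x]c2 -[g1 x]c2.
  by have := congr1 (fun f => f x) ek => /= ->.
apply: (sub_finite_set (B := [set g0; g0])); last exact: finite_set2.
move=> g Ag; left; apply: contrapT => ne; apply: all0; by exists g.
Qed.

Theorem proposition4p2 (R : realType) (V : Type) (adj : V -> V -> Prop)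
  (pos : V -> H2 R) (arc : V -> V -> R -> H2 R) (G : set (H2 R -> H2 R)) :
  is_map adj pos arc ->
  graph_locally_finite adj ->
  one_ended adj ->
  vertices_locally_finite pos ->
  isom_subgroup G ->
  acts_on_map adj pos arc G ->
  quasi_transitive pos G ->
  finitely_generated G.
Proof.
move=> [[[Hsym Hirr] Hconn Hinf] [Hinj _]] Hlf _ _ HG Hact [F [HF HQT]].
have HG' := HG; case: HG' => Hiso Hid Hcomp Hinv.
have act_img g y : G g -> exists y', g (pos y) = pos y'.
  move=> Gg; have [_ _ [sigma [_ hpos _]]] := Hact g Gg.
  by exists (sigma y); rewrite hpos.
have act_adj g x x' y y' : G g -> g (pos x) = pos x' -> g (pos y) = pos y' ->
    adj x y -> adj x' y'.
  move=> Gg ex ey axy; have [_ _ [sigma [_ hpos hadj]]] := Hact g Gg.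
  have -> : x' = sigma x by apply: Hinj; rewrite hpos.
  have -> : y' = sigma y by apply: Hinj; rewrite hpos.
  exact: (proj1 (hadj x y) axy).
have nbr x : exists y, adj x y.
  apply: contrapT => hn; apply: Hinf.
  apply: (sub_finite_set (B := [set x; x])); last exact: finite_set2.
  move=> v _; have := Hconn x v; elim => [_|w v' _ IH awv _]; first by left.
  exfalso; apply: hn; exists v'; by case: IH => <-.
have [v0 _] : exists v0 : V, True.
  apply: contrapT => h; apply: Hinf; apply: (sub_finite_set (B := set0)).
    by move=> v _; apply: h; exists v.
  exact: finite_set0.
have [x0 [Fx0 _]] := HQT v0.
pose N1 := F `|` \bigcup_(x in F) [set z | adj x z].
have finN1 : finite_set N1.
  rewrite /N1 finite_setU; split => //; apply: bigcup_finite => // x _; exact: Hlf.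
pose S := [set g | G g /\ exists x z, [/\ F x, N1 z & g (pos x) = pos z]].
exists S; split.
- apply: (sub_finite_set (B := \bigcup_(x in F) \bigcup_(z in N1)
     \bigcup_(y in [set y | adj x y]) \bigcup_(z' in [set z' | adj z z'])
       [set g | G g /\ g (pos x) = pos z /\ g (pos y) = pos z'])).
    move=> g [Gg [x [z [Fx N1z e]]]].
    have [y axy] := nbr x; have [y' ey] := act_img g y Gg.
    exists x => //; exists z => //; exists y => //; exists y' => //.
    exact: (act_adj g x z y y').
  apply: bigcup_finite => // x Fx; apply: bigcup_finite => // z _.
  apply: bigcup_finite; first exact: Hlf.
  move=> y axy; apply: bigcup_finite; first exact: Hlf.
  move=> z' _; apply: A_finite => // e.
  by apply: (Hirr x); rewrite {2}(Hinj _ _ e).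
- by move=> g [].
have gen_reach v : reach adj setT x0 v ->
    forall h y, G h -> F y -> h (pos y) = pos v -> generated S h.
  elim => [_|w v' rw IH awv _] h y Gh Fy e.
    by apply: gen_gen; split => //; exists y, x0; split => //; left.
  have [y' [Fy' [h' [Gh' e']]]] := HQT w.
  have IH' := IH h' y' Gh' Fy' e'.
  have [h'' Gh'' [d1 d2]] := Hinv h' Gh'.
  have -> : h = h' \o (h'' \o h) by apply: funext => x /=; rewrite d2.
  apply: gen_comp => //; apply: gen_gen; split; first exact: Hcomp.
  have [z ez] := act_img h'' v' Gh''.
  exists y, z; split => //=; last by rewrite e.
  right; exists y' => //=.
  apply: (act_adj h'' w y' v' z) => //.
  by rewrite -e' d1.
move=> g Gg; have [v ev] := act_img g x0 Gg.
exact: (gen_reach v (Hconn x0 v) g x0 Gg Fx0 ev).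
Qed.
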